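(* Let $a\in\mathbb{R}$ and $\gamma>0$ be such that \[ P=\tfrac12(1-\gamma^2a^2)+\sqrt{\gamma^2(-1+\gamma^2)+(\gamma^2a^2-1)^2/4} \] is a real number with $P+\gamma^2-1\neq 0$, and set $\hat a=\frac{aP}{P+\gamma^2-1}$, $\hat g=\frac{\gamma^2a}{P+\gamma^2-1}$. Given a real measurement sequence $y$, for $i\in\{-1,1\}$ define \[ \hat x_i(t+1)=\hat a\hat x_i(t)+iu(t)+\hat gy(t),\quad \hat x_i(0)=0, \] \[ l_i(t+1)=l_i(t)-P\hat x_i(t)^2-\gamma^2y(t)^2+\frac{(P\hat x_i(t)+\gamma^2y(t))^2}{P+\gamma^2-1},\quad l_i(0)=0, \] where the control is \[ u(t)=\begin{cases}-(\hat a\hat x_1(t)+\hat gy(t)) & \text{if } l_1(t+1)\ge l_{-1}(t+1),\\ \hat a\hat x_{-1}(t)+\hat gy(t) & \text{if } l_1(t+1)<l_{-1}(t+1).\end{cases} \] Let $\hat x(t+1)=\hat a\hat x(t)+2\hat gy(t)$, $\hat x(0)=0$. Then for all $t\ge 0$: 1. $\hat x_1(t)=0$ and $\hat x_{-1}(t)=\hat x(t)$ if $l_1(t)\ge l_{-1}(t)$, while $\hat x_1(t)=\hat x(t)$ and $\hat x_{-1}(t)=0$ if $l_1(t)<l_{-1}(t)$. 2. If $l_1(t)\ge l_{-1}(t)$ then \[ l_1(t+1)=l_1(t)-\gamma^2y(t)^2+\frac{(\gamma^2y(t))^2}{P+\gamma^2-1},\quad l_{-1}(t+1)=l_{-1}(t)-P\hat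 x(t)^2-\gamma^2y(t)^2+\frac{(P\hat x(t)+\gamma^2y(t))^2}{P+\gamma^2-1}, \] and if $l_1(t)<l_{-1}(t)$ then \[ l_1(t+1)=l_1(t)-P\hat x(t)^2-\gamma^2y(t)^2+\frac{(P\hat x(t)+\gamma^2y(t))^2}{P+\gamma^2-1},\quad l_{-1}(t+1)=l_{-1}(t)-\gamma^2y(t)^2+\frac{(\gamma^2y(t))^2}{P+\gamma^2-1}. \]
   Context: Note that $l_i(t+1)$ depends only on $\hat x_i(t)$ and $y(t)$, so the control $u(t)$ is well defined from $\hat x_{\pm1}(t)$ and $y(t)$. This is the setting of the scalar system $x(t+1)=ax(t)+bu(t)+w(t)$, $y(t)=x(t)+v(t)$ with unknown input sign $b\in\{-1,1\}$, where $\hat x_i,l_i$ are the observer and cumulative cost for the model $b=i$. *)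

(* Defs.v *)
From Stdlib Require Import Reals.
Open Scope R_scope.

(* Riccati-type constant P (real when the radicand is nonnegative). *)
Definition radicand (a gamma : R) : R :=
  gamma^2 * (-1 + gamma^2) + (gamma^2 * a^2 - 1)^2 / 4.

Definition Pc (a gamma : R) : R :=
  (1/2) * (1 - gamma^2 * a^2) + sqrt (radicand a gamma).

Definition den (a gamma : R) : R := Pc a gamma + gamma^2 - 1.

Definition ahat (a gamma : R) : R := a * Pc a gamma / den a gamma.
Definition ghat (a gamma : R) : R := gamma^2 * a / den a gamma.

Definition lstep (a gamma l xh yt : R) : R :=
  l - Pc a gamma * xh^2 - gamma^2 * yt^2
    + (Pc a gamma * xh + gamma^2 * yt)^2 / den a gamma.

Record st := mkst { x1 : R; xm1 : R; l1 : R; lm1 : R }.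

(* The control u(t), well defined from xhat_{+-1}(t), l_{+-1}(t), y(t). *)
Definition control (a gamma : R) (s : st) (yt : R) : R :=
  if Rle_dec (lstep a gamma (lm1 s) (xm1 s) yt) (lstep a gamma (l1 s) (x1 s) yt)
  then - (ahat a gamma * x1 s + ghat a gamma * yt)
  else ahat a gamma * xm1 s + ghat a gamma * yt.

Definition step (a gamma : R) (s : st) (yt : R) : st :=
  let u := control a gamma s yt in
  mkst (ahat a gamma * x1 s + 1 * u + ghat a gamma * yt)
       (ahat a gamma * xm1 s + (-1) * u + ghat a gamma * yt)
       (lstep a gamma (l1 s) (x1 s) yt)
       (lstep a gamma (lm1 s) (xm1 s) yt).

Fixpoint state (a gamma : R) (y : nat -> R) (t : nat) : st :=
  match t with
  | O => mkst 0 0 0 0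
  | S t' => step a gamma (state a gamma y t') (y t')
  end.

Fixpoint xhat (a gamma : R) (y : nat -> R) (t : nat) : R :=
  match t with
  | O => 0
  | S t' => ahat a gamma * xhat a gamma y t' + 2 * ghat a gamma * y t'
  end.

(* Main.v *)
Require Import Defs.
From Stdlib Require Import Reals.
Open Scope R_scope.

From Stdlib Require Import Lra.

Lemma inv_state (a gamma : R) (y : nat -> R) (t : nat) :
  let s := state a gamma y t in
  x1 s + xm1 s = xhat a gamma y t /\ (l1 s >= lm1 s -> x1 s = 0) /\ (l1 s < lm1 s -> xm1 s = 0).
Proof.
  induction t as [|t IH]; simpl.
  - split; [ring|]. split; intros; lra.
  - destruct IH as [Hs [H1 H2]].
    unfold step, control; simpl.
    destruct (Rle_dec _ _) as [Hle|Hlt].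
    + split; [rewrite <- Hs; ring|]. split; intros; [ring|lra].
    + split; [rewrite <- Hs; ring|]. split; intros; [lra|ring].
Qed.

Theorem proposition4 (a gamma : R) (y : nat -> R) :
  0 < gamma ->
  0 <= radicand a gamma ->
  Pc a gamma + gamma^2 - 1 <> 0 ->
  forall t : nat,
    let s := state a gamma y t in
    let s' := state a gamma y (S t) in
    let P := Pc a gamma in
    let xh := xhat a gamma y t in
    (l1 s >= lm1 s ->
       x1 s = 0 /\ xm1 s = xh /\
       l1 s' = l1 s - gamma^2 * (y t)^2 + (gamma^2 * y t)^2 / (P + gamma^2 - 1) /\
       lm1 s' = lm1 s - P * xh^2 - gamma^2 * (y t)^2
                + (P * xh + gamma^2 * y t)^2 / (P + gamma^2 - 1)) /\
    (l1 s < lm1 s ->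
       x1 s = xh /\ xm1 s = 0 /\
       l1 s' = l1 s - P * xh^2 - gamma^2 * (y t)^2
                + (P * xh + gamma^2 * y t)^2 / (P + gamma^2 - 1) /\
       lm1 s' = lm1 s - gamma^2 * (y t)^2 + (gamma^2 * y t)^2 / (P + gamma^2 - 1)).
Proof.
  intros Hg Hr Hd t s s' P xh.
  destruct (inv_state a gamma y t) as [Hs [H1 H2]].
  fold s in Hs, H1, H2. fold xh in Hs.
  assert (E1 : l1 s' = lstep a gamma (l1 s) (x1 s) (y t)) by reflexivity.
  assert (E2 : lm1 s' = lstep a gamma (lm1 s) (xm1 s) (y t)) by reflexivity.
  unfold lstep, den in E1, E2. fold P in E1, E2.
  split; intros H.
  - pose proof (H1 H) as Z. rewrite Z in Hs, E1. rewrite Rplus_0_l in Hs. rewrite Hs in E2.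
    repeat split; auto. rewrite E1. field. exact Hd.
  - pose proof (H2 H) as Z. rewrite Z in Hs, E2. rewrite Rplus_0_r in Hs. rewrite Hs in E1.
    repeat split; auto. rewrite E2. field. exact Hd.
Qed.
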